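(* Let $T$ be a tree with the fantail topology. Then $T$ is pseudo-radial, of chain-net order $\le 2$. Moreover, if $T$ has height $>\omega$ and, for every $n\in\omega$, every element of $T(n)$ has infinitely many immediate successors, then the chain-net order of $T$ is exactly $2$.
   Context: A tree is a partially ordered set in which the set of predecessors of each element is well-ordered. Levels: $T(0)$ is the set of minimal elements; given $T(\beta)$ for $\beta<\alpha$, $T\restriction\alpha=\bigcup_{\beta<\alpha}T(\beta)$ and $T(\alpha)$ is the set of minimal elements of $T\setminus T\restriction\alpha$. The height of $T$ is the least $\alpha$ with $T(\alpha)=\emptyset$. For $t\in T$, $V_t=\{s\in T:s\ge t\}$; $(s,t]=\{x: s<x\le t\}$. The interval topology on $T$ has as base all sets $(s,t]$ together with all singletons $\{t\}$ with $t$ minimal. The fine wedge topology has as subbase all sets $V_t$ and their complements $T\setminus V_t$. The fantail topology is the meet (greatest lower bound in the lattice of topologies, i.e. intersection) of the interval topology and the fine wedge topology. For $A\subseteq X$ in a space $X$, let $A^{\sim1}$ be the set of all limits of convergent well-ordered nets from $A$; $A^{\sim(\alpha+1)}=(A^{\sim\alpha})^{\sim1}$, and $A^{\sim\alpha}=\bigcup_{\beta<\alpha}A^{\sim\beta}$ for limit $\alpha$. $X$ is pseudo-radial if for every $A$ the closure of $A$ equals $A^{\sim\alpha}$ for some $\alpha$ (closures are obtained by iterating this operation); the chain-net order of $X$ is the least ordinal $\alpha$ such that $A^{\sim(\alpha+1)}=A^{\sim\alpha}=\overline{A}$ for all $A\subseteq X$. *)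

(* Defs.v *)
From Stdlib Require Import List Arith.
Set Implicit Arguments.

Section Tree.
Variable T : Type.
Variable le : T -> T -> Prop.

Definition lt (x y : T) : Prop := le x y /\ x <> y.

Definition has_least (r : T -> T -> Prop) (P : T -> Prop) : Prop :=
  exists m, P m /\ forall y, P y -> r m y.

Definition is_tree : Prop :=
  (forall x, le x x) /\
  (forall x y, le x y -> le y x -> x = y) /\
  (forall x y z, le x y -> le y z -> le x z) /\
  (forall t s1 s2, lt s1 t -> lt s2 t -> le s1 s2 \/ le s2 s1) /\
  (forall t (P : T -> Prop), (forall s, P s -> lt s t) -> (exists s, P s) ->
     has_least le P).

Definition minimal_in (P : T -> Prop) (t : T) : Prop :=
  P t /\ forall s, P s -> ~ lt s t.

(* below n = T|n = union of the levels T(m), m < n;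
   level n = T(n) = minimal elements of T \ T|n. *)
Fixpoint below (n : nat) : T -> Prop :=
  match n with
  | 0 => fun _ => False
  | S k => fun t => below k t \/ minimal_in (fun s => ~ below k s) t
  end.

Definition level (n : nat) : T -> Prop := minimal_in (fun s => ~ below n s).

Definition level_omega : T -> Prop :=
  minimal_in (fun s => forall n, ~ below n s).

(* height > omega  iff  T(beta) is nonempty for every beta <= omega *)
Definition height_gt_omega : Prop :=
  (forall n, exists t, level n t) /\ (exists t, level_omega t).

Definition immediate_successor (t s : T) : Prop :=
  lt t s /\ forall x, lt t x -> ~ lt x s.

Definition infinite_pred (P : T -> Prop) : Prop :=
  ~ exists l : list T, forall x, P x -> In x l.

Definition V (t : T) : T -> Prop := fun s => le t s.
Definition interval (s t : T) : T -> Prop := fun x => lt s x /\ le x t.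

Definition interval_base (B : T -> Prop) : Prop :=
  (exists s t, lt s t /\ forall x, B x <-> interval s t x) \/
  (exists t, minimal_in (fun _ => True) t /\ forall x, B x <-> x = t).

Definition interval_open (U : T -> Prop) : Prop :=
  forall x, U x -> exists B, interval_base B /\ B x /\ forall y, B y -> U y.

Definition fw_subbasic (p : bool * T) : T -> Prop :=
  fun x => if fst p then V (snd p) x else ~ V (snd p) x.

Definition fine_wedge_open (U : T -> Prop) : Prop :=
  forall x, U x -> exists l : list (bool * T),
    (forall p, In p l -> fw_subbasic p x) /\
    (forall y, (forall p, In p l -> fw_subbasic p y) -> U y).

Definition fantail_open (U : T -> Prop) : Prop :=
  interval_open U /\ fine_wedge_open U.
End Tree.

Section Space.
Variable X : Type.
Variable opn : (X -> Prop) -> Prop.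

Definition closure (A : X -> Prop) : X -> Prop :=
  fun x => forall U, opn U -> U x -> exists y, U y /\ A y.

Definition well_order (I : Type) (R : I -> I -> Prop) : Prop :=
  (exists i : I, True) /\
  (forall i, R i i) /\
  (forall i j, R i j -> R j i -> i = j) /\
  (forall i j k, R i j -> R j k -> R i k) /\
  (forall i j, R i j \/ R j i) /\
  (forall P : I -> Prop, (exists i, P i) ->
     exists m, P m /\ forall j, P j -> R m j).

Definition net_converges (I : Type) (R : I -> I -> Prop) (f : I -> X) (x : X)
  : Prop :=
  forall U, opn U -> U x -> exists i0, forall i, R i0 i -> U (f i).

Definition chain_limits (A : X -> Prop) : X -> Prop :=
  fun x => exists (I : Type) (R : I -> I -> Prop) (f : I -> X),
    well_order R /\ (forall i, A (f i)) /\ net_converges R f x.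

Definition chain_iter (k : nat) (A : X -> Prop) : X -> Prop :=
  Nat.iter k chain_limits A.

Definition set_equiv (A B : X -> Prop) : Prop := forall x, A x <-> B x.

Definition pseudo_radial : Prop :=
  forall A, exists k : nat, set_equiv (closure A) (chain_iter k A).

Definition chain_net_order_le (k : nat) : Prop :=
  forall A, set_equiv (chain_iter (S k) A) (chain_iter k A) /\
            set_equiv (chain_iter k A) (closure A).

Definition chain_net_order_eq (k : nat) : Prop :=
  chain_net_order_le k /\ forall m, m < k -> ~ chain_net_order_le m.
End Space.

(* Main.v *)
Require Import Defs.
From Stdlib Require Import List Arith Lia Classical ClassicalEpsilon ProofIrrelevance.

Lemma t_refl {T} {le : T -> T -> Prop} : is_tree le -> forall x, le x x.
Proof. intros H; apply H. Qed.
Lemma t_anti {T} {le : T -> T -> Prop} : is_tree le -> forall x y, le x y -> le y x -> x = y.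
Proof. intros H; apply H. Qed.
Lemma t_trans {T} {le : T -> T -> Prop} : is_tree le -> forall x y z, le x y -> le y z -> le x z.
Proof. intros H; apply H. Qed.
Lemma t_wf {T} {le : T -> T -> Prop} : is_tree le -> forall t (P : T -> Prop), (forall s, P s -> lt le s t) -> (exists s, P s) ->
     has_least le P.
Proof. intros H; apply H. Qed.

Lemma t_comp {T} {le : T -> T -> Prop} : is_tree le -> forall a b t, le a t -> le b t -> le a b \/ le b a.
Proof.
  intros H a b t ha hb.
  destruct (classic (a = t)) as [->|na]; [right; exact hb|].
  destruct (classic (b = t)) as [->|nb]; [left; exact ha|].
  destruct H as (_&_&_&H&_). apply (H t); split; auto.
Qed.

Lemma lt_le_trans {T} {le : T -> T -> Prop} : is_tree le -> forall a b c, lt le a b -> le b c -> lt le a c.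
Proof.
  intros H a b c [h1 h2] h3. split. eapply t_trans; eauto.
  intro e; subst. apply h2. eapply t_anti; eauto.
Qed.
Lemma le_lt_trans {T} {le : T -> T -> Prop} : is_tree le -> forall a b c, le a b -> lt le b c -> lt le a c.
Proof.
  intros H a b c h1 [h2 h3]. split. eapply t_trans; eauto.
  intro e; subst. apply h3. eapply t_anti; eauto.
Qed.
Lemma lt_irrefl {T} {le : T -> T -> Prop} a : ~ lt le a a.
Proof. intros [_ h]; auto. Qed.
Lemma lt_asym {T} {le : T -> T -> Prop} : is_tree le -> forall a b, lt le a b -> le b a -> False.
Proof. intros H a b [h1 h2] h3. apply h2. eapply t_anti; eauto. Qed.

Lemma imm_between {T} {le : T -> T -> Prop} : is_tree le -> forall z w, lt le z w ->
  exists c, immediate_successor le z c /\ le c w.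
Proof.
  intros H z w hzw.
  destruct (classic (exists s, lt le z s /\ lt le s w)) as [[s hs]|hn].
  - destruct (t_wf H w (fun s => lt le z s /\ lt le s w)) as [m [[hm1 hm2] hm3]].
    + intros s0 [_ h]; exact h.
    + exists s; exact hs.
    + exists m; split; [split; [exact hm1|]|apply hm2].
      intros x hx hxm. assert (le m x) by (apply hm3; split; [exact hx| eapply lt_le_trans; eauto; apply hm2]).
      eapply lt_asym; eauto.
  - exists w; split; [split; [exact hzw|]|apply (t_refl H)].
    intros x hx hxw. apply hn; eauto.
Qed.

Lemma imm_eq {T} {le : T -> T -> Prop} : is_tree le -> forall y c1 c2,
  immediate_successor le y c1 -> immediate_successor le y c2 -> le c1 c2 -> c1 = c2.
Proof.
  intros H y c1 c2 [h1 _] [_ h2] h. apply NNPP; intro n.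
  apply (h2 c1 h1). split; auto.
Qed.

Lemma imm_eq' {T} {le : T -> T -> Prop} : is_tree le -> forall y c1 c2 t,
  immediate_successor le y c1 -> immediate_successor le y c2 -> le c1 t -> le c2 t -> c1 = c2.
Proof.
  intros H y c1 c2 t h1 h2 a b. destruct (t_comp H _ _ _ a b).
  eapply imm_eq; eauto. symmetry; eapply imm_eq; eauto.
Qed.

Lemma imm_pred_eq {T} {le : T -> T -> Prop} : is_tree le -> forall p1 p2 b,
  immediate_successor le p1 b -> immediate_successor le p2 b -> p1 = p2.
Proof.
  intros H p1 p2 b [h1 h1'] [h2 h2'].
  destruct (t_comp H p1 p2 b (proj1 h1) (proj1 h2)) as [a|a];
  (destruct (classic (p1 = p2)) as [e|n]; [exact e|]).
  - exfalso; apply (h1' p2); [split; auto| exact h2].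
  - exfalso; apply (h2' p1); [split; auto| exact h1].
Qed.

Lemma inf_fresh {T} (P : T -> Prop) : infinite_pred P -> forall l, exists c, P c /\ ~ In c l.
Proof.
  intros H l. apply NNPP; intro n. apply H. exists l. intros x hx.
  apply NNPP; intro m. apply n; eauto.
Qed.

Lemma finite_clean {T} (P : T -> Prop) : forall l, (forall c, P c -> In c l) ->
  exists l', (forall c, In c l' -> P c) /\ (forall c, P c -> In c l').
Proof.
  intros l; revert P; induction l as [|a l IH]; intros P H.
  - exists nil; split; [intros c []|exact H].
  - destruct (IH (fun c => P c /\ c <> a)) as [l' [h1 h2]].
    + intros c [hc n]. destruct (H c hc); [congruence|auto].
    + destruct (classic (P a)).
      * exists (a :: l'); split.
        -- intros c [<-|hc]; [auto| apply h1; auto].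
        -- intros c hc. destruct (classic (c = a)); [left; auto| right; apply h2; auto].
      * exists l'; split. intros c hc; apply h1; auto.
        intros c hc. apply h2; split; auto. intro; subst; auto.
Qed.

Lemma sep {T} {le : T -> T -> Prop} : is_tree le -> forall (A : T -> Prop) (x : T) (Rg : T -> Prop),
 Rg x ->
 (forall y, Rg y -> le y x) ->
 (forall y z, Rg y -> le y z -> le z x -> Rg z) ->
 (forall z, Rg z -> (exists s, lt le s z) -> exists s, lt le s z /\ forall w, lt le s w -> le w z -> Rg w) ->
 (forall y, Rg y -> ~ A y) ->
 (forall y, Rg y -> exists l, forall c, immediate_successor le y c -> (exists a, A a /\ le c a) -> In c l) ->
 exists U, fantail_open le U /\ U x /\ forall z, U z -> ~ A z.
Proof.
  intros H A x Rg R1 R2 R3 R4 R5 R6.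
  exists (fun z => exists y, Rg y /\ le y z /\ forall w, lt le y w -> le w z -> ~ le w x -> forall a, A a -> ~ le w a).
  split; [split|split].
  -
    intros z [y [hy [hyz hw]]].
    destruct (classic (exists s, lt le s z)) as [hs|hs].
    + destruct (classic (le z x)) as [hzx|hzx].
      * assert (Rz : Rg z) by (eapply R3; eauto).
        destruct (R4 z Rz hs) as [s [hsz hsw]].
        exists (interval le s z). split; [left; exists s, z; split; [exact hsz| tauto]|].
        split; [split; [exact hsz|apply (t_refl H)]|].
        intros w [h1 h2]. exists w. split; [apply hsw; auto|split; [apply (t_refl H)|]].
        intros w' h3 h4. exfalso. eapply lt_asym; eauto.
      * assert (lyz : lt le y z) by (split; [exact hyz| intro e; subst; apply hzx; apply R2; exact hy]).
        exists (interval le y z). split; [left; exists y, z; split; [exact lyz| tauto]|].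
        split; [split; [exact lyz|apply (t_refl H)]|].
        intros w [h1 h2]. exists y. split; [exact hy|split; [apply h1|]].
        intros w' h3 h4. apply hw; auto. eapply t_trans; eauto.
    + exists (fun w => w = z). split.
      * right. exists z. split; [split; [exact I| intros s _ h; apply hs; eauto]| tauto].
      * split; [reflexivity|]. intros w ->. exists y; auto.
  -
    intros z [y [hy [hyz hw]]].
    destruct (classic (le z x)) as [hzx|hzx].
    + assert (Rz : Rg z) by (eapply R3; eauto).
      destruct (R6 z Rz) as [l0 hl0].
      destruct (finite_clean _ l0 (fun c hc => hl0 c (proj1 hc) (proj2 hc))) as [l [hl1 hl2]].
      exists ((true, z) :: map (fun c => (false, c)) l). split.
      * intros p [<-|hp]; [apply (t_refl H)|].
        apply in_map_iff in hp. destruct hp as [c [<- hc]]. simpl. unfold V.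
        destruct (hl1 c hc) as [[h1 _] _]. intro h. eapply lt_asym; eauto.
      * intros w hw'. exists z. split; [exact Rz|split; [apply (hw' (true,z)); left; auto|]].
        intros w' h1 h2 _ a ha h3.
        destruct (imm_between H _ _ h1) as [c [hc1 hc2]].
        destruct (classic (exists a, A a /\ le c a)) as [hb|hb].
        -- apply (hw' (false, c)); [right; apply in_map_iff; exists c; split; auto|].
           simpl; unfold V. eapply t_trans; eauto.
        -- apply hb; exists a; split; auto. eapply t_trans; eauto.
    + exists ((true, z) :: nil). split.
      * intros p [<-|[]]. apply (t_refl H).
      * intros w hw'. assert (hzw : le z w) by (apply (hw' (true,z)); left; auto).
        exists y. split; [exact hy|split; [eapply t_trans; eauto|]].
        intros w' h1 h2 h3 a ha h4.
        destruct (t_comp H w' z w h2 hzw) as [c|c].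
        -- eapply hw; eauto.
        -- assert (lyz : lt le y z) by (split; [exact hyz| intro e; subst; apply hzx; apply R2; exact hy]).
           eapply hw; [exact lyz| apply (t_refl H)| exact hzx| exact ha| eapply t_trans; eauto].
  - exists x; split; [exact R1| split; [apply (t_refl H)|]].
    intros w h1 h2 h3. exfalso; apply h3; exact h2.
  - intros z [y [hy [hyz hw]]] hz.
    destruct (classic (le z x)) as [hzx|hzx].
    + apply (R5 z); [eapply R3; eauto| exact hz].
    + assert (lyz : lt le y z) by (split; [exact hyz| intro e; subst; apply hzx; apply R2; exact hy]).
      eapply hw; [exact lyz| apply (t_refl H)| exact hzx| exact hz| apply (t_refl H)].
Qed.

Definition Ibad {T} (le : T -> T -> Prop) (A : T -> Prop) y :=
  infinite_pred (fun c => immediate_successor le y c /\ exists a, A a /\ le c a).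
Definition Eset {T} (le : T -> T -> Prop) (A : T -> Prop) y := A y \/ Ibad le A y.
Definition Lset {T} (le : T -> T -> Prop) (E : T -> Prop) y :=
  (exists s, lt le s y) /\ forall s, lt le s y -> exists e, E e /\ lt le s e /\ lt le e y.

Lemma notE {T} {le : T -> T -> Prop} (A : T -> Prop) y : ~ Eset le A y ->
  ~ A y /\ exists l, forall c, immediate_successor le y c -> (exists a, A a /\ le c a) -> In c l.
Proof.
  intros h. split; [intro; apply h; left; auto|].
  apply NNPP; intro n. apply h; right. intros [l hl]. apply n. exists l. intros c h1 h2; apply hl; auto.
Qed.

Lemma cl_char {T} {le : T -> T -> Prop} : is_tree le -> forall A x,
  closure (fantail_open le) A x -> Eset le A x \/ Lset le (Eset le A) x.
Proof.
  intros H A x hcl. apply NNPP; intro hn.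
  assert (hE : ~ Eset le A x) by tauto.
  assert (hL : ~ Lset le (Eset le A) x) by tauto.
  assert (exists Rg : T -> Prop, Rg x /\ (forall y, Rg y -> le y x) /\
     (forall y z, Rg y -> le y z -> le z x -> Rg z) /\
     (forall z, Rg z -> (exists s, lt le s z) -> exists s, lt le s z /\ forall w, lt le s w -> le w z -> Rg w) /\
     (forall y, Rg y -> ~ Eset le A y)) as [Rg (R1&R2&R3&R4&R5)].
  { destruct (classic (exists s, lt le s x)) as [hs|hs].
    - assert (exists s0, lt le s0 x /\ forall e, lt le s0 e -> lt le e x -> ~ Eset le A e) as [s0 [hs0 hs0']].
      { apply NNPP; intro m. apply hL. split; [exact hs|]. intros s h.
        apply NNPP; intro m'. apply m. exists s; split; [exact h|]. intros e h1 h2 h3. apply m'. eauto. }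
      exists (fun y => lt le s0 y /\ le y x). split; [split; [exact hs0| apply (t_refl H)]|].
      split; [intros y [_ h]; exact h|].
      split; [intros y z [h1 h2] h3 h4; split; [eapply lt_le_trans; eauto| exact h4]|].
      split; [intros z [h1 h2] _; exists s0; split; [exact h1|]; intros w h3 h4; split; [exact h3| eapply t_trans; eauto]|].
      intros y [h1 h2]. destruct (classic (y = x)) as [->|n]; [exact hE|]. apply hs0'; [exact h1|split; auto].
    - exists (fun y => y = x). split; [reflexivity|].
      split; [intros y ->; apply (t_refl H)|].
      split; [intros y z -> h1 h2; eapply t_anti; eauto|].
      split; [intros z -> h; contradiction|].
      intros y ->; exact hE. }
  destruct (sep H A x Rg R1 R2 R3 R4) as [U [hU [hUx hUA]]].
  - intros y hy. exact (proj1 (notE A y (R5 y hy))).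
  - intros y hy. exact (proj2 (notE A y (R5 y hy))).
  - destruct (hcl U hU hUx) as [y [h1 h2]]. eapply hUA; eauto.
Qed.

Lemma cl_const {X} (opn : (X -> Prop) -> Prop) (A : X -> Prop) x : A x -> chain_limits opn A x.
Proof.
  intros h. exists unit, (fun _ _ => True), (fun _ => x). split; [|split].
  - split; [exists tt; auto|]. split; [auto|]. split; [intros [] [] _ _; auto|].
    split; [auto|]. split; [auto|]. intros P [i hi]. exists i; auto.
  - intros; exact h.
  - intros U _ hU. exists tt. intros; exact hU.
Qed.

Lemma cl_mono {X} (opn : (X -> Prop) -> Prop) (A B : X -> Prop) x :
  (forall y, A y -> B y) -> chain_limits opn A x -> chain_limits opn B x.
Proof.
  intros h [I [R [f [h1 [h2 h3]]]]]. exists I, R, f. split; [exact h1|split; [intros; apply h; apply h2|exact h3]].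
Qed.

Lemma cl_closure {X} (opn : (X -> Prop) -> Prop) (A : X -> Prop) x :
  chain_limits opn A x -> closure opn A x.
Proof.
  intros [I [R [f [h1 [h2 h3]]]]] U hU hx. destruct (h3 U hU hx) as [i0 hi0].
  exists (f i0). split; [apply hi0; apply h1| apply h2].
Qed.

Lemma closure_idem {X} (opn : (X -> Prop) -> Prop) (A : X -> Prop) x :
  closure opn (closure opn A) x -> closure opn A x.
Proof.
  intros h U hU hx. destruct (h U hU hx) as [y [h1 h2]]. apply (h2 U hU h1).
Qed.

Lemma closure_mono {X} (opn : (X -> Prop) -> Prop) (A B : X -> Prop) x :
  (forall y, A y -> B y) -> closure opn A x -> closure opn B x.
Proof.
  intros h hc U hU hx. destruct (hc U hU hx) as [y [h1 h2]]. eauto.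
Qed.

Lemma iter_closure {X} (opn : (X -> Prop) -> Prop) (A : X -> Prop) k x :
  chain_iter opn k A x -> closure opn A x.
Proof.
  revert x; induction k as [|k IH]; intros x h.
  - intros U _ hx. exists x; auto.
  - simpl in h. apply closure_idem. eapply closure_mono; [exact IH|]. apply cl_closure; exact h.
Qed.

Lemma nat_least (P : nat -> Prop) : (exists i, P i) -> exists m, P m /\ forall j, P j -> m <= j.
Proof.
  intros [i hi].
  assert (forall n, forall i, i <= n -> P i -> exists m, P m /\ forall j, P j -> m <= j).
  { induction n as [|n IH]; intros i0 h0 hp.
    - exists i0. split; auto. intros; lia.
    - destruct (classic (exists k, k < i0 /\ P k)) as [[k [hk1 hk2]]|hn].
      + apply (IH k); auto; lia.
      + exists i0; split; auto. intros j hj. apply NNPP; intro c. apply hn. exists j; split; auto; lia. }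
  eapply H; eauto.
Qed.

Lemma nat_wo : well_order Nat.le.
Proof.
  split; [exists 0; auto|]. split; [auto|]. split; [intros; lia|]. split; [intros; lia|].
  split; [intros; lia|]. apply nat_least.
Qed.

Lemma Ibad_limit {T} {le : T -> T -> Prop} : is_tree le -> forall A y,
  Ibad le A y -> chain_limits (fantail_open le) A y.
Proof.
  intros H A y hI.
  set (P := fun c => immediate_successor le y c /\ exists a, A a /\ le c a) in hI.
  assert (hf : forall l, exists c, P c /\ ~ In c l) by (apply inf_fresh; exact hI).
  set (fresh := fun l => constructive_indefinite_description _ (hf l)).
  set (L := nat_rect (fun _ => list T) nil (fun _ l => proj1_sig (fresh l) :: l)).
  set (c := fun n => proj1_sig (fresh (L n))).
  assert (hc : forall n, P (c n) /\ ~ In (c n) (L n)) by (intro n; exact (proj2_sig (fresh (L n)))).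
  assert (hin : forall n m, n < m -> In (c n) (L m)).
  { intros n m; induction m as [|m IH]; intros h; [lia|].
    simpl. destruct (Nat.eq_dec n m) as [->|ne]; [left; reflexivity|right; apply IH; lia]. }
  assert (cinj : forall n m, c n = c m -> n = m).
  { intros n m e. destruct (lt_eq_lt_dec n m) as [[h|h]|h]; auto.
    - exfalso. apply (proj2 (hc m)). rewrite <- e. apply hin; auto.
    - exfalso. apply (proj2 (hc n)). rewrite e. apply hin; auto. }
  assert (ha : forall n, exists a, A a /\ le (c n) a) by (intro n; exact (proj2 (proj1 (hc n)))).
  set (a := fun n => proj1_sig (constructive_indefinite_description _ (ha n))).
  assert (hA : forall n, A (a n) /\ le (c n) (a n)) by (intro n; exact (proj2_sig (constructive_indefinite_description _ (ha n)))).
  exists nat, Nat.le, a. split; [exact nat_wo|split; [intro n; apply hA|]].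
  intros U [_ hU] hy. destruct (hU y hy) as [l [hl1 hl2]].
  assert (forall l, (forall p, In p l -> fw_subbasic le p y) ->
     exists N, forall n, N <= n -> forall p, In p l -> fw_subbasic le p (a n)) as key.
  { clear hl1 hl2. induction l0 as [|p l0 IH]; intros hp.
    - exists 0. intros n _ p [].
    - destruct (IH (fun q hq => hp q (or_intror hq))) as [N1 hN1].
      assert (exists N2, forall n, N2 <= n -> fw_subbasic le p (a n)) as [N2 hN2].
      { specialize (hp p (or_introl eq_refl)). destruct p as [[|] t]; unfold fw_subbasic, V in *; simpl in *.
        - exists 0. intros n _. eapply (t_trans H); [exact hp|]. eapply (t_trans H); [|apply hA].
          apply (proj1 (proj1 (proj1 (hc n)))).
        - assert (claim : forall n, le t (a n) -> le (c n) t).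
          { intros n hta. destruct (t_comp H _ _ _ hta (proj2 (hA n))) as [h|h]; [|exact h].
            assert (hyc : lt le y (c n)) by apply (proj1 (proj1 (hc n))).
            destruct (t_comp H t y (c n) h (proj1 hyc)) as [h'|h']; [contradiction|].
            destruct (classic (t = c n)) as [->|ne]; [apply (t_refl H)|].
            exfalso. apply (proj2 (proj1 (proj1 (hc n))) t); [split; auto; intro; subst; auto| split; auto]. }
          destruct (classic (exists n0, le (c n0) t)) as [[n0 hn0]|hn].
          + exists (S n0). intros n hn hta. specialize (claim n hta).
            assert (c n = c n0) by (eapply imm_eq'; eauto; [apply (hc n)|apply (hc n0)]).
            apply cinj in H0. lia.
          + exists 0. intros n _ hta. apply hn. exists n; auto. }
      exists (max N1 N2). intros n hn q [<-|hq]; [apply hN2; lia| apply hN1; auto; lia]. }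
  destruct (key l hl1) as [N hN]. exists N. intros n hn. apply hl2. apply hN; auto.
Qed.

Lemma Lset_limit {T} {le : T -> T -> Prop} : is_tree le -> forall (E : T -> Prop) x,
  Lset le E x -> chain_limits (fantail_open le) E x.
Proof.
  intros H E x [[s0 hs0] hL].
  set (Ix := {s : T | lt le s x}).
  assert (he : forall i : Ix, exists e, E e /\ lt le (proj1_sig i) e /\ lt le e x) by (intros [s hs]; apply hL; exact hs).
  set (f := fun i => proj1_sig (constructive_indefinite_description _ (he i))).
  assert (hf : forall i, E (f i) /\ lt le (proj1_sig i) (f i) /\ lt le (f i) x)
    by (intro i; exact (proj2_sig (constructive_indefinite_description _ (he i)))).
  exists Ix, (fun i j => le (proj1_sig i) (proj1_sig j)), f. split; [|split; [intro i; apply hf|]].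
  - split; [exists (exist _ s0 hs0); auto|].
    split; [intros; apply (t_refl H)|].
    split; [intros [i hi] [j hj] h1 h2; simpl in *; assert (i = j) by (eapply t_anti; eauto); subst; f_equal; apply proof_irrelevance|].
    split; [intros i j k; apply (t_trans H)|].
    split; [intros [i hi] [j hj]; simpl; destruct (t_comp H i j x (proj1 hi) (proj1 hj)); auto|].
    intros P [i hi].
    destruct (t_wf H x (fun s => exists h : lt le s x, P (exist _ s h))) as [m [[hm hPm] hm']].
    + intros s [h _]; exact h.
    + destruct i as [i h]. exists i, h; exact hi.
    + exists (exist _ m hm). split; [exact hPm|]. intros [j hj] hPj. simpl. apply hm'. exists hj; exact hPj.
  - intros U [hU _] hx. destruct (hU x hx) as [B [hB [hBx hBU]]].
    destruct hB as [[s [t [hst hB]]]|[t [[_ ht] hB]]].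
    + apply hB in hBx. destruct hBx as [hsx hxt].
      exists (exist _ s hsx). intros [i hi] hsi; simpl in hsi.
      apply hBU. apply hB. destruct (hf (exist _ i hi)) as [_ [h1 h2]]; simpl in h1.
      split; [eapply le_lt_trans; eauto| eapply (t_trans H); [apply h2| exact hxt]].
    + apply hB in hBx. subst. exfalso. exact (ht s0 I hs0).
Qed.

Lemma cl_two {T} {le : T -> T -> Prop} : is_tree le -> forall A x,
  closure (fantail_open le) A x <-> chain_iter (fantail_open le) 2 A x.
Proof.
  intros H A x. split; [|apply iter_closure].
  intros hc. simpl. destruct (cl_char H A x hc) as [hE|hL].
  - apply cl_const. destruct hE as [hA|hI]; [apply cl_const; exact hA| apply Ibad_limit; auto].
  - eapply cl_mono; [|apply Lset_limit; eauto; exact hL].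
    intros y [hA|hI]; [apply cl_const; exact hA| apply Ibad_limit; auto].
Qed.

Lemma order2 {T} {le : T -> T -> Prop} : is_tree le -> chain_net_order_le (fantail_open le) 2.
Proof.
  intros H A. split.
  - intro x. split.
    + intro h. apply (cl_two H). eapply iter_closure; exact h.
    + intro h. simpl. apply cl_const. exact h.
  - intro x. split; apply (cl_two H).
Qed.

Lemma below_down {T} {le : T -> T -> Prop} : is_tree le -> forall n s t,
  below le n t -> le s t -> below le n s.
Proof.
  intros H n; induction n as [|n IH]; intros s t h hst; [exact h|].
  destruct h as [h|[h1 h2]]; [left; eapply IH; eauto|].
  destruct (classic (s = t)) as [->|ne]; [right; split; auto|].
  left. apply NNPP; intro m. apply (h2 s m). split; auto.
Qed.

Lemma below_level {T} {le : T -> T -> Prop} : forall n s, below le n s -> exists m, level le m s.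
Proof.
  induction n as [|n IH]; intros s h; [destruct h|].
  destruct h as [h|h]; [apply IH; auto| exists n; exact h].
Qed.

Lemma omega_facts {T} {le : T -> T -> Prop} : is_tree le -> height_gt_omega le ->
   (forall (n : nat) (t : T), level le n t -> infinite_pred (immediate_successor le t)) ->
   exists x (q : nat -> T),
     (forall s, lt le s x -> exists p, lt le s p /\ lt le p x) /\
     (exists s, lt le s x) /\
     (forall p, lt le p x -> infinite_pred (immediate_successor le p)) /\
     (forall n, lt le (q n) x) /\ (forall s, lt le s x -> exists n, le s (q n)).
Proof.
  intros H [_ [x [hx1 hx2]]] hinf.
  assert (hb : forall s, lt le s x -> exists m, below le m s).
  { intros s hs. apply NNPP; intro n. apply (hx2 s); auto. intros m hm; apply n; eauto. }
  assert (hex : forall n, exists s, ~ below le n s /\ lt le s x).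
  { intro n. specialize (hx1 (S n)). simpl in hx1.
    apply NNPP; intro m. apply hx1. right. split; [intro; apply hx1; left; auto|].
    intros s hs hl. apply m; eauto. }
  assert (hq : forall n, exists m, (~ below le n m /\ lt le m x) /\ forall s, ~ below le n s -> lt le s x -> le m s).
  { intro n. destruct (t_wf H x (fun s => ~ below le n s /\ lt le s x)) as [m [hm1 hm2]].
    - intros s [_ h]; exact h.
    - apply hex.
    - exists m; split; auto. }
  set (q := fun n => proj1_sig (constructive_indefinite_description _ (hq n))).
  assert (hqp : forall n, (~ below le n (q n) /\ lt le (q n) x) /\ forall s, ~ below le n s -> lt le s x -> le (q n) s)
    by (intro n; exact (proj2_sig (constructive_indefinite_description _ (hq n)))).
  assert (cof : forall s, lt le s x -> exists n, le s (q n) /\ s <> q n).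
  { intros s hs. destruct (hb s hs) as [m hm]. exists m.
    destruct (t_comp H s (q m) x (proj1 hs) (proj1 (proj2 (proj1 (hqp m))))) as [h|h].
    - split; [exact h| intro e; apply (proj1 (proj1 (hqp m))); rewrite <- e; exact hm].
    - exfalso. apply (proj1 (proj1 (hqp m))). eapply below_down; eauto. }
  exists x, q. split; [|split; [|split; [|split]]].
  - intros s hs. destruct (cof s hs) as [n [h1 h2]]. exists (q n). split; [split; auto| apply hqp].
  - exists (q 0). apply hqp.
  - intros p hp. destruct (hb p hp) as [m hm]. destruct (below_level m p hm) as [k hk]. eapply hinf; eauto.
  - intro n; apply hqp.
  - intros s hs. destruct (cof s hs) as [n [h1 _]]. eauto.
Qed.

Lemma in_closure {T} {le : T -> T -> Prop} : is_tree le -> forall x,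
  (forall s, lt le s x -> exists p, lt le s p /\ lt le p x) ->
  (exists s, lt le s x) ->
  (forall p, lt le p x -> infinite_pred (immediate_successor le p)) ->
  closure (fantail_open le) (fun b => ~ le b x /\ exists p, lt le p x /\ immediate_successor le p b) x.
Proof.
  intros H x X1 [s0 X2] X3 U [hU hW] hx.
  destruct (hU x hx) as [B [hB [hBx hBU]]].
  destruct hB as [[s [t [hst hB]]]|[t [[_ ht] hB]]].
  - apply hB in hBx. destruct hBx as [hsx hxt].
    destruct (X1 s hsx) as [p [hsp hpx]].
    assert (hUp : U p) by (apply hBU; apply hB; split; [exact hsp| eapply (t_trans H); [apply hpx|exact hxt]]).
    destruct (hW p hUp) as [l [hl1 hl2]].
    assert (exists c, immediate_successor le p c /\ ~ In c (map snd l) /\ ~ le c x) as [c [hc1 [hc2 hc3]]].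
    { destruct (inf_fresh _ (X3 p hpx) (map snd l)) as [c1 [h1 h2]].
      destruct (classic (le c1 x)) as [h3|h3]; [|exists c1; auto].
      destruct (inf_fresh _ (X3 p hpx) (c1 :: map snd l)) as [c2 [h4 h5]].
      exists c2. split; [exact h4|split; [intro; apply h5; right; auto|]].
      intro h6. apply h5; left. eapply imm_eq'; eauto. }
    exists c. split; [|split; [exact hc3| exists p; auto]].
    apply hl2. intros [[|] t'] hin; specialize (hl1 _ hin); unfold fw_subbasic, V in *; simpl in *.
    + eapply (t_trans H); [exact hl1| apply hc1].
    + intro htc. destruct (t_comp H t' p c htc (proj1 (proj1 hc1))) as [h|h]; [contradiction|].
      destruct (classic (t' = c)) as [->|ne].
      * apply hc2. apply in_map_iff. exists (false, c); auto.
      * apply (proj2 hc1 t'); split; auto. intro; subst; auto.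
  - apply hB in hBx. subst. exfalso. exact (ht s0 I X2).
Qed.

Lemma branch_claim {T} {le : T -> T -> Prop} : is_tree le -> forall x b p y c,
  ~ le b x -> lt le p x -> immediate_successor le p b -> le y x ->
  immediate_successor le y c -> le c b -> le c x \/ (c = b /\ y = p).
Proof.
  intros H x b p y c hb hp hpb hy hyc hcb.
  destruct (classic (y = p)) as [->|ne].
  { right. split; [eapply imm_eq; eauto|auto]. }
  destruct (t_comp H y p x hy (proj1 hp)) as [h|h].
  - destruct (t_comp H c p b hcb (proj1 (proj1 hpb))) as [h'|h'].
    + left. eapply (t_trans H); [exact h'| apply hp].
    + destruct (classic (p = c)) as [->|ne2]; [left; apply hp|].
      exfalso. assert (c = b).
      { apply NNPP; intro n. apply (proj2 hpb c); split; auto. }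
      subst c. apply (proj2 hyc p); split; auto.
  - exfalso. assert (lt le y b) by (eapply lt_le_trans; eauto; apply hyc).
    apply (proj2 hpb y); [split; [exact h| intro e; apply ne; symmetry; exact e]| assumption].
Qed.

Lemma not_limit {T} {le : T -> T -> Prop} : is_tree le -> forall x (q : nat -> T),
  (forall n, lt le (q n) x) -> (forall s, lt le s x -> exists n, le s (q n)) ->
  ~ chain_limits (fantail_open le) (fun b => ~ le b x /\ exists p, lt le p x /\ immediate_successor le p b) x.
Proof.
  intros H x q hq hcof [I [R [f [hwo [hA hconv]]]]].
  destruct hwo as [[i00 _] [Rrefl [Ranti [Rtrans [Rtot _]]]]].
  assert (hpr : forall i, exists p, lt le p x /\ immediate_successor le p (f i)) by (intro i; apply hA).
  set (pr := fun i => proj1_sig (constructive_indefinite_description _ (hpr i))).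
  assert (hprp : forall i, lt le (pr i) x /\ immediate_successor le (pr i) (f i))
    by (intro i; exact (proj2_sig (constructive_indefinite_description _ (hpr i)))).
  assert (step1 : forall q0, lt le q0 x -> exists i0, forall i, R i0 i -> lt le q0 (pr i)).
  { intros q0 hq0.
    destruct (sep H (fun b => (~ le b x /\ exists p, lt le p x /\ immediate_successor le p b) /\
                        exists p, immediate_successor le p b /\ le p q0) x
                    (fun y => lt le q0 y /\ le y x)) as [U [hU [hUx hUA]]].
    - split; [exact hq0| apply (t_refl H)].
    - intros y [_ h]; exact h.
    - intros y z [h1 h2] h3 h4. split; [eapply lt_le_trans; eauto| exact h4].
    - intros z [h1 h2] _. exists q0. split; [exact h1|]. intros w h3 h4. split; [exact h3| eapply (t_trans H); eauto].
    - intros y [h1 h2] [[hb _] _]. apply hb; exact h2.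
    - intros y [h1 h2]. exists nil. intros c hc [b [[[hb1 _] [p [hp1 hp2]]] hcb]]. exfalso.
      assert (lt le p y) by (eapply le_lt_trans; eauto).
      assert (lt le y b) by (eapply lt_le_trans; eauto; apply hc).
      apply (proj2 hp1 y); assumption.
    - destruct (hconv U hU hUx) as [i0 hi0]. exists i0. intros i hi.
      specialize (hi0 i hi). destruct (hprp i) as [h1 h2].
      destruct (t_comp H q0 (pr i) x (proj1 hq0) (proj1 h1)) as [h|h].
      + split; [exact h|]. intro e. apply (hUA (f i) hi0). split; [apply hA|]. exists (pr i); split; [exact h2|]. rewrite <- e; apply (t_refl H).
      + exfalso. apply (hUA (f i) hi0). split; [apply hA|]. exists (pr i); split; auto. }
  assert (hth : forall q0, exists i0, lt le q0 x -> forall i, R i0 i -> lt le q0 (pr i)).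
  { intro q0. destruct (classic (lt le q0 x)) as [h|h].
    - destruct (step1 q0 h) as [i0 hi0]. exists i0; auto.
    - exists i00. intro; contradiction. }
  set (th := fun q0 => proj1_sig (constructive_indefinite_description _ (hth q0))).
  assert (hthp : forall q0, lt le q0 x -> forall i, R (th q0) i -> lt le q0 (pr i))
    by (intro q0; exact (proj2_sig (constructive_indefinite_description _ (hth q0)))).
  set (mx := fun a b => if excluded_middle_informative (R a b) then b else a).
  assert (hmx : forall a b, R a (mx a b) /\ R b (mx a b)).
  { intros a b. unfold mx. destruct (excluded_middle_informative (R a b)) as [h|h].
    - split; auto.
    - split; auto. destruct (Rtot a b); [contradiction|auto]. }
  set (j := nat_rect (fun _ => I) (th (q 0)) (fun n jn => mx (th (pr jn)) (th (q n)))).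
  assert (hj1 : forall n, R (th (pr (j n))) (j (S n))) by (intro n; apply hmx).
  assert (hj2 : forall n, R (th (q n)) (j (S n))) by (intro n; apply hmx).
  assert (inc : forall n, lt le (pr (j n)) (pr (j (S n)))) by (intro n; apply hthp; [apply hprp| apply hj1]).
  assert (mono : forall n m, n < m -> lt le (pr (j n)) (pr (j m))).
  { intros n m; induction m as [|m IH]; intro h; [lia|].
    destruct (Nat.eq_dec n m) as [->|ne]; [apply inc|].
    eapply (lt_le_trans H); [apply IH; lia| apply inc]. }
  destruct (sep H (fun b => exists n, b = f (j n)) x (fun y => lt le (q 0) y /\ le y x)) as [U [hU [hUx hUB]]].
  - split; [apply hq| apply (t_refl H)].
  - intros y [_ h]; exact h.
  - intros y z [h1 h2] h3 h4. split; [eapply lt_le_trans; eauto| exact h4].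
  - intros z [h1 h2] _. exists (q 0). split; [exact h1|]. intros w h3 h4. split; [exact h3| eapply (t_trans H); eauto].
  - intros y [h1 h2] [n ->]. apply (proj1 (hA (j n))); exact h2.
  - intros y [h1 h2].
    assert (exists l1, forall c, immediate_successor le y c -> le c x -> In c l1) as [l1 hl1].
    { destruct (classic (exists c0, immediate_successor le y c0 /\ le c0 x)) as [[c0 [hc0 hc0']]|hn].
      - exists (c0 :: nil). intros c hc hcx. left. eapply imm_eq'; eauto.
      - exists nil. intros c hc hcx. apply hn; eauto. }
    assert (exists l2, forall n, pr (j n) = y -> In (f (j n)) l2) as [l2 hl2].
    { destruct (classic (exists n0, pr (j n0) = y)) as [[n0 hn0]|hn].
      - exists (f (j n0) :: nil). intros n hn. left.
        destruct (lt_eq_lt_dec n n0) as [[h|h]|h].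
        + exfalso. specialize (mono _ _ h). rewrite hn, hn0 in mono. eapply lt_irrefl; eauto.
        + subst; auto.
        + exfalso. specialize (mono _ _ h). rewrite hn, hn0 in mono. eapply lt_irrefl; eauto.
      - exists nil. intros n hn'. apply hn; eauto. }
    exists (l1 ++ l2). intros c hc [b [[n ->] hcb]].
    destruct (hprp (j n)) as [hp1 hp2].
    destruct (branch_claim H x (f (j n)) (pr (j n)) y c (proj1 (hA (j n))) hp1 hp2 h2 hc hcb) as [h|[-> e]].
    + apply in_or_app; left; auto.
    + apply in_or_app; right; apply hl2; auto.
  - destruct (hconv U hU hUx) as [is his].
    destruct (classic (exists n, R is (j n))) as [[n hn]|hn].
    + apply (hUB (f (j n))); [apply his; exact hn| exists n; reflexivity].
    + assert (hall : forall n, lt le (q n) (pr is)).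
      { intro n. apply hthp; [apply hq|]. apply (Rtrans _ (j (S n))); [apply hj2|].
        destruct (Rtot is (j (S n))) as [h|h]; [exfalso; apply hn; eauto|exact h]. }
      destruct (hcof (pr is) (proj1 (hprp is))) as [n hn'].
      eapply lt_asym; [exact H| apply hall| exact hn'].
Qed.

Theorem theorem2p4 (T : Type) (le : T -> T -> Prop) :
  is_tree le ->
  pseudo_radial (fantail_open le) /\
  chain_net_order_le (fantail_open le) 2 /\
  (height_gt_omega le ->
   (forall (n : nat) (t : T), level le n t ->
      infinite_pred (immediate_successor le t)) ->
   chain_net_order_eq (fantail_open le) 2).
Proof.
  intros H. split; [|split].
  - intro A. exists 2. intro x. apply (cl_two H).
  - apply (order2 H).
  - intros hh hinf. destruct (omega_facts H hh hinf) as [x [q (X1&X2&X3&X4&X5)]].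
    split; [apply (order2 H)|].
    intros m hm hle.
    pose proof (in_closure H x X1 X2 X3) as hc.
    pose proof (not_limit H x q X4 X5) as hn.
    set (A := fun b => ~ le b x /\ exists p, lt le p x /\ immediate_successor le p b) in *.
    destruct (hle A) as [h1 h2].
    destruct m as [|[|m]]; [| |lia].
    + apply hn. apply (h1 x). apply (h2 x). exact hc.
    + apply hn. apply (h2 x). exact hc.
Qed.
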